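(* Let $p$ be a prime with $p\equiv 1\pmod 3$, let $H_p=\mathrm{PSL}_2(F_p)$, let $A_p=\{(x_i)\in F_3^{p+1}\mid \sum_{i=1}^{p+1}x_i=0\}$ and $G_p=A_p\rtimes H_p$ (as defined in the context). Let $K$ be a group and let $N<G_p\times K$ be a subgroup which is normalized by $G_p\times\{e\}$. Then $N$ is equal to $\{e\}\times L$, $A_p\times L$ or $G_p\times L$, for some subgroup $L<K$.
   Context: $F_q$ denotes the field with $q$ elements. $\mathrm{PSL}_2(F_p)=\mathrm{SL}_2(F_p)/\{\pm I\}$ acts on the projective line $\mathrm{P}^1(F_p)=F_p\cup\{\infty\}$ by linear fractional transformations $\begin{pmatrix}a&b\\c&d\end{pmatrix}\cdot x=\frac{ax+b}{cx+d}$. This induces the permutational representation of $\mathrm{PSL}_2(F_p)$ on $F_3^{\mathrm{P}^1(F_p)}$ given by $g\cdot x=(x_{g^{-1}\cdot i})_{i\in\mathrm{P}^1(F_p)}$. One identifies $F_3^{\mathrm{P}^1(F_p)}$ with $F_3^{p+1}$ via a fixed bijection $\mathrm{P}^1(F_p)\rightarrow\{1,\dots,p+1\}$ sending $\infty$ to $p+1$. The subspace $A_p$ (vectors with coordinate sum $0$) is $H_p$-invariant, and $G_p=A_p\rtimes H_p$ is the corresponding semidirect product, with $A_p$ and $H_p$ viewed as subgroups of $G_p$. *)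

(* Defs.v *)
From HB Require Import structures.
From mathcomp Require Import all_boot all_order all_algebra all_fingroup.
Set Implicit Arguments. Unset Strict Implicit. Unset Printing Implicit Defensive.
Import GRing.Theory.

Section Gp.
Variable p : nat.

(* The projective line P^1(F_p) = F_p ∪ {∞}, with None standing for ∞. *)
Definition P1 := option 'F_p.

Definition lft (M : 'M['F_p]_2) (x : P1) : P1 :=
  let a := M ord0 ord0 in let b := M ord0 ord_max in
  let c := M ord_max ord0 in let d := M ord_max ord_max in
  match x with
  | None => if c == 0 then None else Some (a / c)
  | Some t => if c * t + d == 0 then None else Some ((a * t + b) / (c * t + d))
  end%R.

(* H_p = PSL_2(F_p), realized (faithfully) as the group of permutations of
   P^1(F_p) given by linear fractional transformations of determinant 1. *)
Definition Hp : {set {perm P1}} :=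
  [set s : {perm P1} | [exists M : 'M['F_p]_2,
      (\det M == 1)%R && [forall x, s x == lft M x]]].

Definition vec := {ffun P1 -> 'F_3}.

(* permutation action on coordinates: (h . b)_i = b_{h i}; with MathComp's
   composition convention ((s * t) x = t (s x)) this is a left action. *)
Definition pact (h : {perm P1}) (b : vec) : vec := [ffun i => b (h i)].

Lemma pact1 b : pact 1 b = b.
Proof. by apply/ffunP=> i; rewrite ffunE perm1. Qed.

Lemma pactM h k b : pact (h * k) b = pact h (pact k b).
Proof. by apply/ffunP=> i; rewrite !ffunE permM. Qed.

Lemma pactD h a b : pact h (a + b)%R = (pact h a + pact h b)%R.
Proof. by apply/ffunP=> i; rewrite !ffunE. Qed.

Lemma pactN h a : pact h (- a)%R = (- pact h a)%R.
Proof. by apply/ffunP=> i; rewrite !ffunE. Qed.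

(* The ambient group: F_3^{P^1} ⋊ Sym(P^1) *)
Definition W := (vec * {perm P1})%type.
HB.instance Definition _ := Finite.on W.

Definition mulW (x y : W) : W := ((x.1 + pact x.2 y.1)%R, (x.2 * y.2)%g).
Definition oneW : W := (0%R, 1%g).
Definition invW (x : W) : W := ((- pact (x.2^-1)%g x.1)%R, (x.2^-1)%g).

Lemma mulWA : associative mulW.
Proof.
by case=> a h [b k] [c l]; rewrite /mulW /= pactD pactM addrA mulgA.
Qed.

Lemma mul1W : left_id oneW mulW.
Proof. by case=> b k; rewrite /mulW /= pact1 add0r mul1g. Qed.

Lemma mulVW : left_inverse oneW invW mulW.
Proof.
case=> a h; by rewrite /mulW /invW /= addNr mulVg.
Qed.

HB.instance Definition _ := Finite_isGroup.Build W mulWA mul1W mulVW.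

Definition Ap : {set W} :=
  [set g : W | ((\sum_i g.1 i)%R == 0%R) && (g.2 == 1%g)].

Definition Gp : {set W} :=
  [set g : W | ((\sum_i g.1 i)%R == 0%R) && (g.2 \in Hp)].

End Gp.

Definition is_subgroup (K : groupType) (S : K -> Prop) : Prop :=
  [/\ S 1%g, (forall x y, S x -> S y -> S (x * y)%g) & (forall x, S x -> S (x^-1)%g)].

Definition is_subgroup_GpxK (p : nat) (K : groupType) (N : W p * K -> Prop) : Prop :=
  [/\ (forall x, N x -> x.1 \in Gp p),
      N (1%g, 1%g),
      (forall x y, N x -> N y -> N ((x.1 * y.1)%g, (x.2 * y.2)%g)) &
      (forall x, N x -> N ((x.1^-1)%g, (x.2^-1)%g))].

Definition normalized_by_Gp (p : nat) (K : groupType) (N : W p * K -> Prop) : Prop :=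
  forall g x, g \in Gp p -> N x -> N ((g * x.1 * g^-1)%g, x.2).

(* Main.v *)
Require Import Defs.
From HB Require Import structures.
From mathcomp Require Import all_boot all_order all_algebra all_fingroup.
From mathcomp Require Import all_solvable ring.
From Stdlib Require Import ClassicalEpsilon.
Set Implicit Arguments. Unset Strict Implicit. Unset Printing Implicit Defensive.
Import GRing.Theory.


Section P1.
Variable p : nat.
Local Notation F := 'F_p.
Local Notation P := (P1 p).
Local Open Scope ring_scope.

Definition mk2 (a b c d : F) : 'M[F]_2 :=
  \matrix_(i, j) if i == ord0 then (if j == ord0 then a else b)
                 else (if j == ord0 then c else d).

Lemma det_mk2 a b c d : \det (mk2 a b c d) = a * d - b * c.
Proof.
rewrite (expand_det_row _ ord0) !big_ord_recl big_ord0 /cofactor !det_mx11.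
rewrite !mxE /= /bump /= expr0 expr1; ring.
Qed.

Definition lft4 (a b c d : F) (x : P) : P :=
  match x with
  | None => if c == 0 then None else Some (a / c)
  | Some t => if c * t + d == 0 then None else Some ((a * t + b) / (c * t + d))
  end.

Lemma lft4N a b c d : lft4 a b c d None = if c == 0 then None else Some (a / c).
Proof. by []. Qed.
Lemma lft4S a b c d t : lft4 a b c d (Some t) =
  if c * t + d == 0 then None else Some ((a * t + b) / (c * t + d)).
Proof. by []. Qed.

Lemma lftE M : lft M =1 lft4 (M ord0 ord0) (M ord0 ord_max) (M ord_max ord0) (M ord_max ord_max).
Proof. by []. Qed.

Lemma lft_mk2 a b c d : lft (mk2 a b c d) =1 lft4 a b c d.
Proof. by move=> x; rewrite lftE !mxE. Qed.

Definition hom (x : P) : F * F := if x is Some t then (t, 1) else (1, 0).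
Definition proj (w : F * F) : P := if w.2 == 0 then None else Some (w.1 / w.2).
Definition app (a b c d : F) (w : F * F) := (a * w.1 + b * w.2, c * w.1 + d * w.2).

Lemma lft4E a b c d x : lft4 a b c d x = proj (app a b c d (hom x)).
Proof. by case: x => [t|]; rewrite /proj /app /= ?mulr1 ?mulr0 ?addr0. Qed.

Lemma proj_scale l w : l != 0 -> proj (l * w.1, l * w.2) = proj w.
Proof.
move=> hl; rewrite /proj /= mulf_eq0 (negbTE hl) /=.
case: eqP => // /eqP h2; congr Some; field; by apply/andP.
Qed.

Lemma hom_proj (u v : F) : (u, v) != (0 : F, 0 : F) ->
  exists2 l, l != 0 & (u, v) = (l * (hom (proj (u, v))).1, l * (hom (proj (u, v))).2).
Proof.
move=> hw; rewrite /proj /=; case: eqP => [hv|/eqP hv] /=.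
  exists u; last by rewrite hv mulr1 mulr0.
  by apply: contraNneq hw => ->; rewrite hv.
exists v => //; rewrite mulr1; congr pair; field; exact: hv.
Qed.

Lemma app_comp a b c d a' b' c' d' w :
  app a b c d (app a' b' c' d' w) =
  app (a * a' + b * c') (a * b' + b * d') (c * a' + d * c') (c * b' + d * d') w.
Proof. by rewrite /app /=; congr pair; ring. Qed.

Lemma app_scale a b c d l w :
  app a b c d (l * w.1, l * w.2) = (l * (app a b c d w).1, l * (app a b c d w).2).
Proof. by rewrite /app /=; congr pair; ring. Qed.

Lemma app_nz a b c d (u v : F) : a * d - b * c != 0 -> (u, v) != (0 : F, 0 : F) ->
  app a b c d (u, v) != (0 : F, 0 : F).
Proof.
move=> hdet hw; apply: contraNneq hw; rewrite /app /=.
move/eqP; rewrite xpair_eqE => /andP [/eqP e1 /eqP e2].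
have hu : (a * d - b * c) * u = d * (a * u + b * v) - b * (c * u + d * v) by ring.
have hv : (a * d - b * c) * v = a * (c * u + d * v) - c * (a * u + b * v) by ring.
rewrite e1 e2 !mulr0 subrr in hu hv.
move/eqP: hu; rewrite mulf_eq0 (negbTE hdet) /= => /eqP ->.
by move/eqP: hv; rewrite mulf_eq0 (negbTE hdet) /= => /eqP ->.
Qed.

Lemma hom_nz x : hom x != (0 : F, 0 : F).
Proof.
apply/negP => /eqP h; [have := congr1 fst h; have := congr1 snd h] => /=.
by case: x h => [t|] _ /= => [h1 _|_ h1]; exact: (negP (@oner_neq0 F) (introT eqP h1)).
Qed.

Lemma hom_proj' (w : F * F) : w != (0 : F, 0 : F) ->
  exists2 l, l != 0 & w = (l * (hom (proj w)).1, l * (hom (proj w)).2).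
Proof. by rewrite [w]surjective_pairing; apply: hom_proj. Qed.

Lemma app_nz' a b c d (w : F * F) : a * d - b * c != 0 -> w != (0 : F, 0 : F) ->
  app a b c d w != (0 : F, 0 : F).
Proof. by rewrite [w]surjective_pairing; apply: app_nz. Qed.

Lemma lft4_comp (a b c d a' b' c' d' : F) x : a' * d' - b' * c' != 0 ->
  lft4 a b c d (lft4 a' b' c' d' x) =
  lft4 (a * a' + b * c') (a * b' + b * d') (c * a' + d * c') (c * b' + d * d') x.
Proof.
move=> hdet; rewrite lft4E (lft4E a') lft4E -app_comp.
have /hom_proj' [l hl Ew] := app_nz' hdet (hom_nz x).
by rewrite {2}Ew app_scale proj_scale.
Qed.

Lemma lft4_id k x : k != 0 -> lft4 k 0 0 k x = x.
Proof.
move=> hk; case: x => [t|] /=; rewrite ?eqxx // mul0r add0r (negbTE hk).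
by congr Some; field.
Qed.

Definition lftf a b c d : P -> P :=
  if a * d - b * c != 0 then lft4 a b c d else id.

Lemma lftf_inj a b c d : injective (lftf a b c d).
Proof.
rewrite /lftf; case: ifP => [hdet|_] //.
apply: (can_inj (g := lft4 d (- b) (- c) a)) => x.
rewrite lft4_comp //.
have -> : d * a + - b * c = a * d - b * c by ring.
have -> : d * b + - b * d = 0 by ring.
have -> : - c * a + a * c = 0 by ring.
have -> : - c * b + a * d = a * d - b * c by ring.
exact: lft4_id.
Qed.

Definition lftp a b c d : {perm P} := perm (@lftf_inj a b c d).

Lemma lftpE a b c d x : a * d - b * c = 1 -> lftp a b c d x = lft4 a b c d x.
Proof. by move=> h; rewrite permE /lftf h oner_neq0. Qed.

Lemma lftp_Hp a b c d : a * d - b * c = 1 -> lftp a b c d \in Hp p.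
Proof.
move=> h; rewrite inE; apply/existsP; exists (mk2 a b c d).
rewrite det_mk2 h eqxx /=; apply/forallP => x.
by rewrite lft_mk2 lftpE.
Qed.

Lemma ord2P (i : 'I_2) : i = ord0 \/ i = ord_max.
Proof. by case: i => [[|[|]]] // ?; [left|right]; apply: val_inj. Qed.

Lemma mk2_eta (M : 'M[F]_2) :
  M = mk2 (M ord0 ord0) (M ord0 ord_max) (M ord_max ord0) (M ord_max ord_max).
Proof.
by apply/matrixP => i j; rewrite mxE; case: (ord2P i) => ->; case: (ord2P j) => ->.
Qed.

Lemma HpE s : s \in Hp p -> exists a b c d : F, a * d - b * c = 1 /\ s = lftp a b c d.
Proof.
rewrite inE => /existsP [M /andP [/eqP hdet /forallP hs]].
rewrite (mk2_eta M) det_mk2 in hdet.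
exists (M ord0 ord0), (M ord0 ord_max), (M ord_max ord0), (M ord_max ord_max).
split => //; apply/permP => x; rewrite lftpE // (eqP (hs x)); exact: lftE.
Qed.

Lemma lftp_mul a b c d a' b' c' d' : a * d - b * c = 1 -> a' * d' - b' * c' = 1 ->
  (lftp a' b' c' d' * lftp a b c d)%g =
  lftp (a * a' + b * c') (a * b' + b * d') (c * a' + d * c') (c * b' + d * d').
Proof.
move=> h h'; apply/permP => x; rewrite permM !lftpE ?lft4_comp ?h' ?oner_neq0 //.
by rewrite -[1](mulr1 1) -{1}h -h'; ring.
Qed.

Lemma lftp1 : lftp 1 0 0 1 = 1%g.
Proof.
by apply/permP => x; rewrite perm1 lftpE ?lft4_id ?oner_neq0 // mulr1 mulr0 subr0.
Qed.

Lemma Hp_group_set : group_set (Hp p).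
Proof.
apply/group_setP; split; first by rewrite -lftp1 lftp_Hp // mulr1 mulr0 subr0.
move=> s t /HpE [a [b [c [d [h ->]]]]] /HpE [a' [b' [c' [d' [h' ->]]]]].
rewrite lftp_mul //; apply: lftp_Hp.
by rewrite -[1](mulr1 1) -{1}h -h'; ring.
Qed.

Canonical Hp_group := group Hp_group_set.



Lemma lftpV a b c d : a * d - b * c = 1 -> (lftp a b c d)^-1%g = lftp d (- b) (- c) a.
Proof.
move=> h; apply/eqP; rewrite eq_invg_mul lftp_mul //; last by rewrite -h; ring.
rewrite -lftp1; apply/eqP; congr lftp; rewrite -?h; ring.
Qed.

Definition T (e : F) := lftp 1 e 0 1.
Lemma detT e : 1 * 1 - e * (0 : F) = 1. Proof. ring. Qed.
Lemma T_Hp e : T e \in Hp p. Proof. exact/lftp_Hp/detT. Qed.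
Lemma TE e (t : F) : T e (Some t) = Some (t + e).
Proof.
rewrite /T lftpE ?detT // lft4S mul0r add0r oner_eq0; congr Some; field; exact: oner_neq0.
Qed.
Lemma TN e : T e None = None.
Proof. by rewrite /T lftpE ?detT // lft4N eqxx. Qed.

Lemma TM e e' : (T e * T e')%g = T (e + e').
Proof. rewrite /T lftp_mul ?detT //; congr lftp; ring. Qed.
Lemma T0 : T 0 = 1%g.
Proof. by rewrite /T -lftp1. Qed.

Definition U := [set T e | e : F].
Lemma U_group_set : group_set U.
Proof.
apply/group_setP; split; first by apply/imsetP; exists 0; rewrite ?T0.
move=> _ _ /imsetP [e _ ->] /imsetP [e' _ ->]; rewrite TM.
by apply/imsetP; exists (e + e').
Qed.
Canonical U_group := group U_group_set.

Lemma U_Hp : U \subset Hp p.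
Proof. by apply/subsetP => _ /imsetP [e _ ->]; apply: T_Hp. Qed.

Definition S := lftp 0 (-1) 1 0.
Lemma detS : 0 * 0 - (-1) * (1 : F) = 1. Proof. ring. Qed.
Lemma S_Hp : S \in Hp p. Proof. exact/lftp_Hp/detS. Qed.
Lemma SN : S None = Some 0.
Proof. by rewrite /S lftpE ?detS // lft4N oner_eq0 mul0r. Qed.

Lemma Hp_trans w : exists2 g, g \in Hp p & g None = w.
Proof.
case: w => [t|]; last by exists 1%g; rewrite ?group1 ?perm1.
exists (S * T t)%g; first by rewrite groupM ?S_Hp ?T_Hp.
by rewrite permM SN TE add0r.
Qed.

Lemma stab_normU g e : g \in Hp p -> g None = None -> (T e ^ g)%g \in U.
Proof.
move=> /HpE [a [b [c [d [h ->]]]]]; rewrite lftpE // lft4N.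
case: eqP => [c0 _|//]; move: h; rewrite c0 => h.
have hd : d != 0 by apply: contra_eq_neq h => ->; rewrite mulr0 mulr0 subr0 eq_sym oner_neq0.
have ha : a != 0 by apply: contra_eq_neq h => ->; rewrite mul0r mulr0 subr0 eq_sym oner_neq0.
apply/imsetP; exists (a * e / d) => //.
rewrite /conjg lftpV // /T !lftp_mul ?detT // ?mulr0 ?subr0 ?mul0r ?mulr1 //;
  try by rewrite -h; ring.
have ea : a = d^-1 by apply: (mulIf hd); rewrite mulVf // -h; ring.
by congr lftp; rewrite ?ea; field.
Qed.


Definition L (c : F) := lftp 1 0 c 1.
Definition Si := lftp 0 1 (-1) 0.
Lemma detSi : 0 * 0 - 1 * (-1 : F) = 1. Proof. ring. Qed.
Lemma detL c : 1 * 1 - 0 * (c : F) = 1. Proof. ring. Qed.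
Lemma Si_Hp : Si \in Hp p. Proof. exact/lftp_Hp/detSi. Qed.

Lemma L_conj c : L c = (T (- c) ^ Si)%g.
Proof.
rewrite /conjg /Si lftpV ?detSi // /T !lftp_mul ?detT ?detSi //; try by ring.
by congr lftp; ring.
Qed.

Lemma factor_c (a b c d : F) : a * d - b * c = 1 -> c != 0 ->
  lftp a b c d = (T ((d - 1) / c)%R * L c * T ((a - 1) / c)%R)%g.
Proof.
move=> h hc; have eb : b = (a * d - 1) / c.
  by rewrite -h; field.
rewrite /T /L !lftp_mul ?detT ?detL //; try by ring.
by congr lftp; rewrite ?eb; field.
Qed.

Lemma factor_0 (a b d : F) : a * d - b * 0 = 1 ->
  lftp a b 0 d = (lftp a b a (b + d)%R * L (-1)%R)%g.
Proof.
move=> h; rewrite /L lftp_mul ?detL //; last by rewrite -h; ring.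
by congr lftp; ring.
Qed.

Lemma Hp_sub_conjU (X : {group {perm P}}) :
  (forall g e, g \in Hp p -> (T e ^ g)%g \in X) -> Hp p \subset X.
Proof.
move=> hX; have TX e : T e \in X by rewrite -(conjg1 (T e)) hX.
have LX c : L c \in X by rewrite L_conj hX ?Si_Hp.
have gen a b c d : a * d - b * c = 1 -> c != 0 -> lftp a b c d \in X.
  by move=> h hc; rewrite factor_c // !groupM.
apply/subsetP => s /HpE [a [b [c [d [h ->]]]]].
case: (eqVneq c 0) => [c0|]; last exact: gen.
move: h; rewrite c0 => h; rewrite factor_0 // groupM ?LX // gen //.
  by rewrite -h; ring.
by apply: contra_eq_neq h => ->; rewrite mul0r mulr0 subr0 eq_sym oner_neq0.
Qed.

Definition D := lftp 2 0 0 2^-1.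

Section Prime.
Hypothesis p_pr : prime p.
Hypothesis p3 : (p %% 3 = 1)%N.

Lemma p_gt3 : (3 < p)%N.
Proof. by move: p_pr p3; case: (p) => [|[|[|[|]]]]. Qed.

Lemma natF_neq0 n : (0 < n < p)%N -> (n%:R : F) != 0.
Proof.
case/andP => n0 np; apply/eqP => h; have := val_Fp_nat p_pr n; rewrite h modn_small //.
by move=> e; move: n0; rewrite -e.
Qed.

Lemma two_neq0 : (2 : F) != 0.
Proof. by apply: natF_neq0; rewrite /= (ltn_trans _ p_gt3). Qed.
Lemma three_neq0 : (3 : F) != 0.
Proof. by apply: natF_neq0; rewrite /= p_gt3. Qed.

Lemma detD : 2 * 2^-1 - 0 * 0 = 1 :> F.
Proof. by rewrite mulfV ?two_neq0 // mulr0 subr0. Qed.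
Lemma D_Hp : D \in Hp p. Proof. exact/lftp_Hp/detD. Qed.

Lemma D_comm e : [~ D, T e]%g = T (- (3 * e))%R.
Proof.
have h2 := two_neq0.
rewrite /commg /conjg /D /T !lftpV ?detT ?detD // !lftp_mul ?detT ?detD //;
  try by rewrite -detD; field.
by congr lftp; field.
Qed.

Lemma TV e : (T e)^-1%g = T (- e).
Proof. by apply/eqP; rewrite eq_invg_mul TM subrr T0. Qed.

Lemma Hp_simple (Q : {group {perm P}}) : (Q <| Hp p)%g -> (Q :=: 1)%g \/ Q :=: Hp p.
Proof.
move=> nQ; have /andP [sQ nQH] := nQ.
case: (eqVneq Q 1%G) => [->|ntQ]; [by left|right].
have [q0 Qq0 Nq0] : exists2 q, q \in Q & q None != None.
  have [q Qq ntq] := trivgPn _ ntQ.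
  have [w hw] : exists w, q w != w.
    case: (pickP (fun w => q w != w)) => [w hw|hall]; first by exists w.
    by case/eqP: ntq; apply/permP => w; have := hall w; rewrite perm1 => /negbFE/eqP.
  have [g Hg gN] := Hp_trans w.
  exists (q ^ g^-1)%g; first by rewrite memJ_norm // (subsetP nQH) ?groupV.
  rewrite conjgE invgK !permM gN; apply: contraNneq hw => e.
  by rewrite -[q w](permKV g) e gN.
have Qtr w : exists2 q, q \in Q & q None = w.
  case: w => [z|]; last by exists 1%g; rewrite ?group1 ?perm1.
  case E: (q0 None) Nq0 => [y0|] // _.
  exists (q0 ^ T (z - y0))%g; first by rewrite memJ_norm // (subsetP nQH) ?T_Hp.
  by rewrite conjgE !permM TV TN E TE; congr Some; rewrite addrC subrK.
pose X := (Q <*> U_group)%G.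
have conjUX g e : g \in Hp p -> (T e ^ g)%g \in X.
  move=> Hg; have [q Qq qN] := Qtr (g None).
  have Hb : (g * q^-1)%g \in Hp p by rewrite groupM ?groupV // (subsetP sQ).
  have bN : (g * q^-1)%g None = None by rewrite permM -qN permK.
  rewrite -(mulgKV q g) conjgM groupJ //.
    by rewrite (subsetP (joing_subr _ _)) // stab_normU.
  by rewrite (subsetP (joing_subl _ _)).
have HX : Hp p \subset X by apply: Hp_sub_conjU.
have nQU : (U \subset 'N(Q))%g := subset_trans U_Hp nQH.
have nQX : (X \subset 'N(Q))%g by rewrite join_subG normG.
have dX : (X^`(1) \subset Q)%g.
  apply: (der1_min nQX); rewrite quotientYidl //; apply: quotient_abelian.
  apply/centsP => _ /imsetP [e _ ->] _ /imsetP [e' _ ->].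
  by rewrite /commute !TM addrC.
have UQ : U \subset Q.
  apply/subsetP => _ /imsetP [b _ ->].
  have -> : T b = [~ D, T (- (b / 3))]%g.
    by rewrite D_comm; congr T; field; exact: three_neq0.
  rewrite (subsetP dX) // derg1 mem_commg // (subsetP HX) ?D_Hp ?T_Hp //.
apply/eqP; rewrite eqEsubset sQ (subset_trans HX) //.
by rewrite join_subG subxx.
Qed.

End Prime.

End P1.


Section WW.
Variable p : nat.
Local Notation F := 'F_p.
Local Notation P := (P1 p).
Local Notation W := (W p).
Local Notation vec := (vec p).
Local Open Scope ring_scope.

Lemma mulWE (x y : W) : (x * y)%g = (x.1 + pact x.2 y.1, x.2 * y.2)%g.
Proof. by []. Qed.
Lemma invWE (x : W) : (x^-1)%g = (- pact (x.2^-1)%g x.1, (x.2^-1)%g).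
Proof. by []. Qed.
Lemma oneWE : (1%g : W) = (0, 1%g).
Proof. by []. Qed.

Lemma pactE h (a : vec) i : pact h a i = a (h i).
Proof. by rewrite ffunE. Qed.

Lemma pact0 h : pact h (0 : vec) = 0.
Proof. by apply/ffunP => i; rewrite !ffunE. Qed.

Lemma sum_pact h (a : vec) : \sum_i pact h a i = \sum_i a i.
Proof.
by rewrite [RHS](reindex_inj (@perm_inj _ h)); apply: eq_bigr => i _; rewrite pactE.
Qed.

Lemma sumD (a b : vec) : \sum_i (a + b) i = \sum_i a i + \sum_i b i.
Proof. by rewrite -big_split; apply: eq_bigr => i _; rewrite ffunE. Qed.

Lemma sumN (a : vec) : \sum_i (- a) i = - \sum_i a i.
Proof. by rewrite -sumrN; apply: eq_bigr => i _; rewrite ffunE. Qed.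

Lemma sum0 : \sum_i (0 : vec) i = 0.
Proof. by rewrite big1 // => i _; rewrite ffunE. Qed.

Lemma GpE x : (x \in Gp p) = (\sum_i x.1 i == 0) && (x.2 \in Hp p).
Proof. by rewrite inE. Qed.

Lemma Gp_group_set : group_set (Gp p).
Proof.
apply/group_setP; split.
  by rewrite GpE oneWE /= sum0 eqxx group1.
move=> x y; rewrite !GpE => /andP [/eqP sx hx] /andP [/eqP sy hy].
by rewrite mulWE /= sumD sum_pact sx sy addr0 eqxx groupM.
Qed.
Canonical Gp_group := group Gp_group_set.

Lemma Ap_group_set : group_set (Ap p).
Proof.
apply/group_setP; split.
  by rewrite inE oneWE /= sum0 !eqxx.
move=> x y; rewrite !inE => /andP [/eqP sx /eqP hx] /andP [/eqP sy /eqP hy].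
by rewrite mulWE /= sumD sum_pact sx sy addr0 hx hy mulg1 !eqxx.
Qed.
Canonical Ap_group := group Ap_group_set.

Lemma Ap_Gp : Ap p \subset Gp p.
Proof.
by apply/subsetP => x; rewrite GpE inE => /andP [-> /eqP ->]; rewrite group1.
Qed.

Lemma inAp (a : vec) : ((a, 1%g) \in Ap p) = (\sum_i a i == 0).
Proof. by rewrite inE /= eqxx andbT. Qed.

Lemma ApE x : x \in Ap p -> x = (x.1, 1%g).
Proof. by rewrite inE => /andP [_ /eqP <-]; case: x. Qed.

Lemma mulA1 (a b : vec) : (((a, 1%g) : W) * ((b, 1%g) : W))%g = ((a + b, 1%g) : W).
Proof. by rewrite mulWE /= pact1 mulg1. Qed.

Lemma invA1 (a : vec) : (((a, 1%g) : W)^-1)%g = ((- a, 1%g) : W).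
Proof. by rewrite invWE /= invg1 pact1. Qed.

Lemma expA1 (a : vec) n : (((a, 1%g) : W) ^+ n)%g = ((a *+ n, 1%g) : W).
Proof.
elim: n => [|n IH]; first by rewrite expg0 mulr0n.
by rewrite expgS IH mulA1 mulrS.
Qed.

Lemma prodA1 (I : Type) (r : seq I) (f : I -> vec) :
  (\prod_(i <- r) ((f i, 1%g) : W))%g = ((\sum_(i <- r) f i, 1%g) : W).
Proof.
elim: r => [|i r IH]; first by rewrite !big_nil.
by rewrite !big_cons IH mulA1.
Qed.

Lemma conjA1 (a : vec) (x : W) : (((a, 1%g) : W) ^ x)%g = ((pact (x.2^-1)%g a, 1%g) : W).
Proof.
rewrite conjgE !mulWE invWE /= pact1 mul1g mulVg pactD.
by rewrite addrCA addNr addr0.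
Qed.


Lemma sum_ind (i : P) : \sum_k ((k == i)%:R : 'F_3) = 1.
Proof.
by rewrite (bigD1 i) //= eqxx big1 ?addr0 // => k /negbTE ->.
Qed.

Lemma faithful_pact (h : {perm P}) :
  (forall a : vec, \sum_i a i = 0 -> pact h a = a) -> h = 1%g.
Proof.
move=> hf; apply/permP => i; rewrite perm1.
pose j : P := if i is None then Some 0 else None.
have ji : (j == i) = false by rewrite /j; case: (i).
pose a : vec := [ffun k => (k == i)%:R - (k == j)%:R].
have sa : \sum_k a k = 0.
  rewrite (eq_bigr (fun k => (k == i)%:R - (k == j)%:R)) => [|k _]; last by rewrite ffunE.
  by rewrite sumrB !sum_ind subrr.
have := congr1 (fun b : vec => b i) (hf a sa); rewrite pactE !ffunE eqxx (eq_sym i j) ji.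
by case: eqP => [->|_] //; case: (_ == j) => /eqP.
Qed.

Lemma cent_pact (x : W) (a : vec) :
  (x * ((a, 1%g) : W))%g = (((a, 1%g) : W) * x)%g -> pact x.2 a = a.
Proof.
rewrite !mulWE /= pact1 => /(congr1 fst) /= /eqP.
by rewrite addrC (inj_eq (addIr _)) => /eqP.
Qed.


Lemma sumP1 (f : P -> 'F_3) : \sum_x f x = f None + \sum_(s : F) f (Some s).
Proof.
rewrite (bigD1 None) //=; congr (_ + _).
rewrite (reindex (@Some F)) /=; first by apply: eq_bigl.
by exists (fun x => odflt 0 x) => [s _|[s|]] //; rewrite inE.
Qed.

Lemma F3_cases (c : 'F_3) : c = 0 \/ c = 1 \/ c = -1.
Proof. by case: c => [[|[|[|]]]] // ?; [left|right;left|right;right]; apply/val_inj. Qed.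

Section Irr.
Hypothesis p_pr : prime p.
Hypothesis p3 : (p %% 3 = 1)%N.

Lemma pF3 : (p%:R : 'F_3) = 1.
Proof. by rewrite -Fp_nat_mod // p3. Qed.

Lemma Ap_normal : (Ap p <| Gp p)%g.
Proof.
apply/andP; split; first exact: Ap_Gp.
apply/subsetP => x Gx; rewrite inE; apply/subsetP => _ /imsetP [y Ay ->].
rewrite (ApE Ay) conjA1 inAp sum_pact -inAp -(ApE Ay) //.
Qed.

Lemma Ap_irr (V : {group W}) : (V <| Gp p)%g -> (V \subset Ap p)%g -> (V :!=: 1)%g ->
  (Ap p \subset V)%g.
Proof.
move=> /andP [sVG nVG] sVA ntV.
pose inV (a : vec) := ((a, 1%g) : W) \in V.
have inVJ a h : inV a -> h \in Hp p -> inV (pact h a).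
  move=> Va Hh; have G0 : ((0, h^-1)%g : W) \in Gp p.
    by rewrite GpE /= sum0 eqxx groupV.
  by rewrite /inV -[h](invgK h) -[(pact _ _, _)]/(pact (((0, h^-1)%g : W).2)^-1 a, 1%g)
    -conjA1 memJ_norm // (subsetP nVG).
have inVM a b : inV a -> inV b -> inV (a + b).
  by move=> Va Vb; rewrite /inV -mulA1 groupM.
have inVN a : inV a -> inV (- a).
  by move=> Va; rewrite /inV -invA1 groupV.
have inVX a n : inV a -> inV (a *+ n).
  by move=> Va; rewrite /inV -expA1 groupX.
have inVS (I : Type) (r : seq I) (f : I -> vec) : (forall i, inV (f i)) -> inV (\sum_(i <- r) f i).
  by move=> hf; rewrite /inV -prodA1; apply: group_prod => i _; apply: hf.
have [v Vv ntv] := trivgPn _ ntV.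
have Av := subsetP sVA v Vv.
have [a [Va sa ha]] : exists a, [/\ inV a, \sum_i a i = 0 & a None != 0].
  have [i hi] : exists i, v.1 i != 0.
    case: (pickP (fun i => v.1 i != 0)) => [i hi|hall]; first by exists i.
    case/eqP: ntv; rewrite (ApE Av) oneWE; congr pair; apply/ffunP => i.
    by have := hall i; rewrite ffunE => /negbFE/eqP.
  have [g Hg gN] := Hp_trans i.
  exists (pact g v.1); split.
  - by apply: inVJ => //; rewrite /inV -(ApE Av).
  - by rewrite sum_pact; move: (Av); rewrite {1}(ApE Av) inAp => /eqP.
  - by rewrite pactE gN.
pose w : vec := \sum_(e : F) pact (@T p e) a.
have Vw : inV w by apply: inVS => e; apply: inVJ; rewrite ?T_Hp.
have wN : w None = a None.
  rewrite /w sum_ffunE (eq_bigr (fun _ => a None)) => [|e _]; last by rewrite pactE TN.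
  by rewrite sumr_const card_Fp // -mulr_natr pF3 mulr1.
have wS t : w (Some t) = - a None.
  rewrite /w sum_ffunE (eq_bigr (fun e => a (Some (t + e)))) => [|e _]; last by rewrite pactE TE.
  have -> : \sum_(e : F) a (Some (t + e)) = \sum_(e : F) a (Some e) by rewrite [RHS](reindex_inj (addrI t)).
  by have := sumP1 a; rewrite sa => /esym/eqP; rewrite addrC addr_eq0 => /eqP.
pose f : vec := [ffun x => if x is None then 1 else -1].
have Vf : inV f.
  case: (F3_cases (a None)) => [a0|[a1|am1]]; first by rewrite a0 eqxx in ha.
  - suff -> : f = w by [].
    by apply/ffunP => -[t|]; rewrite /f ffunE ?wS ?wN a1.
  - suff -> : f = - w by apply: inVN.
    by apply/ffunP => -[t|]; rewrite /f !ffunE ?wS ?wN am1 ?opprK.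
have Vfj j : inV [ffun x => if x == j then 1 else -1].
  have [g Hg gN] := Hp_trans j.
  suff -> : [ffun x => if x == j then 1 else -1] = pact g^-1 f.
    by apply: inVJ; rewrite ?groupV.
  apply/ffunP => x; rewrite pactE !ffunE; case: eqP => [->|hx].
    by rewrite -gN permK.
  case E: (g^-1%g x) => [s|] //.
  by case: hx; rewrite -gN -E permKV.
have Vd j : inV [ffun x => (x == j)%:R - (x == None)%:R].
  suff -> : [ffun x => (x == j)%:R - (x == None)%:R] =
            f - [ffun x => if x == j then 1 else -1].
    by apply: inVM => //; apply: inVN.
  by apply/ffunP => -[s|]; rewrite !ffunE; case: (_ == j); apply/eqP.
apply/subsetP => y Ay; rewrite (ApE Ay).
have sy : \sum_i y.1 i = 0 by move: (Ay); rewrite {1}(ApE Ay) inAp => /eqP.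
have mulnE (b : vec) n x : (b *+ n) x = b x *+ n.
  by elim: n => [|n IH]; rewrite ?mulr0n ?ffunE // !mulrS ffunE IH.
suff -> : y.1 = \sum_(j : P) ([ffun x => (x == j)%:R - (x == None)%:R] *+ (y.1 j : nat)).
  by apply: inVS => j; apply: inVX.
apply/ffunP => x; rewrite sum_ffunE.
rewrite (eq_bigr (fun j => ((x == j)%:R - (x == None)%:R) * y.1 j)) => [|j _]; last first.
  by rewrite mulnE ffunE -[X in _ = _ * X]natr_Zp mulr_natr.
rewrite (eq_bigr (fun j => (x == j)%:R * y.1 j - (x == None)%:R * y.1 j)) => [|j _]; last first.
  by rewrite mulrBl.
rewrite sumrB -mulr_sumr sy mulr0 subr0 (bigD1 x) //= eqxx mul1r big1 ?addr0 //.
by move=> j /negbTE; rewrite eq_sym => ->; rewrite mul0r.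
Qed.


Lemma Gp_Ap_mem (x : W) : x \in Gp p -> x.2 = 1%g -> x \in Ap p.
Proof. move=> Gx x2; rewrite inE x2 eqxx andbT; by move: Gx; rewrite GpE => /andP []. Qed.

Lemma normal_Gp (M : {group W}) : (M <| Gp p)%g ->
  [\/ M :=: 1%g, M :=: Ap p | M :=: Gp p].
Proof.
move=> nM; have /andP [sMG nMG] := nM.
have /andP [_ nAG] := Ap_normal.
have nV : (M :&: Ap p <| Gp p)%g := normalI nM Ap_normal.
have [V1|ntV] := boolP (M :&: Ap p \subset [1])%g.
  apply: Or31; apply/eqP; rewrite eqEsubset sub1G andbT; apply/subsetP => m Mm.
  have Gm := subsetP sMG m Mm.
  have m2 : m.2 = 1%g.
    apply: faithful_pact => a sa; apply: cent_pact.
    have Aa : ((a, 1%g) : W) \in Ap p by rewrite inAp sa.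
    have Ga := subsetP Ap_Gp _ Aa.
    have : ([~ m, (a, 1%g)] \in M :&: Ap p)%g.
      rewrite inE; apply/andP; split.
        by rewrite commgEl groupM ?groupV // memJ_norm // (subsetP nMG).
      by rewrite commgEr groupM ?groupV // memJ_norm ?groupV // (subsetP nAG).
    by move/(subsetP V1); rewrite inE => /commgP.
  by apply: (subsetP V1); rewrite inE Mm Gp_Ap_mem.
have ntV' : (M :&: Ap p :!=: 1)%g.
  by apply: contra ntV => /eqP ->; apply: subxx.
have AM : (Ap p \subset M)%g.
  exact: subset_trans (Ap_irr nV (subsetIr _ _) ntV') (subsetIl _ _).
pose Q := [set x.2 | x : W in M].
have Q_gs : group_set Q.
  apply/group_setP; split; first by apply/imsetP; exists 1%g.
  move=> _ _ /imsetP [m Mm ->] /imsetP [m' Mm' ->].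
  by apply/imsetP; exists (m * m')%g; rewrite ?groupM.
pose QG := group Q_gs.
have nQ : (QG <| Hp p)%g.
  apply/andP; split.
    by apply/subsetP => _ /imsetP [m Mm ->]; have := subsetP sMG m Mm; rewrite GpE => /andP [].
  apply/subsetP => h Hh; rewrite inE; apply/subsetP => _ /imsetP [_ /imsetP [m Mm ->] ->].
  have G0 : ((0, h)%g : W) \in Gp p by rewrite GpE /= sum0 eqxx.
  apply/imsetP; exists (m ^ ((0, h)%g : W))%g; first by rewrite memJ_norm // (subsetP nMG).
  by [].
have [Q1|QH] := Hp_simple p_pr p3 nQ.
  apply: Or32; apply/eqP; rewrite eqEsubset AM andbT; apply/subsetP => m Mm.
  apply: Gp_Ap_mem; first exact: (subsetP sMG).
  have : m.2 \in QG by apply/imsetP; exists m.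
  by rewrite Q1 inE => /eqP.
apply: Or33; apply/eqP; rewrite eqEsubset sMG /=; apply/subsetP => g Gg.
have : g.2 \in QG by rewrite QH; move: Gg; rewrite GpE => /andP [].
case/imsetP => m Mm gm.
have Ag : (g * m^-1)%g \in Ap p.
  apply: Gp_Ap_mem; first by rewrite groupM ?groupV // (subsetP sMG).
  by change ((g.2 * m.2^-1)%g = 1%g); rewrite gm mulgV.
by rewrite -(mulgKV m g) groupM // (subsetP AM).
Qed.

End Irr.
End WW.


Definition dec (P : Prop) : bool := if excluded_middle_informative P then true else false.
Lemma decP (P : Prop) : reflect P (dec P).
Proof. by rewrite /dec; case: excluded_middle_informative => h; constructor. Qed.

Section Main.
Variables (p : nat) (K : groupType) (N : W p * K -> Prop).
Hypotheses (p_pr : prime p) (p3 : p %% 3 = 1).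
Hypotheses (sN : is_subgroup_GpxK N) (nN : normalized_by_Gp N).
Local Notation W := (W p).

Let NG x : N x -> x.1 \in Gp p. Proof. by case: sN => h *; apply: h. Qed.
Let N1 : N (1%g, 1%g). Proof. by case: sN. Qed.
Let NM x y : N x -> N y -> N ((x.1 * y.1)%g, (x.2 * y.2)%g). Proof. by case: sN => _ _ h *; apply: h. Qed.
Let NV x : N x -> N ((x.1^-1)%g, (x.2^-1)%g). Proof. by case: sN => _ _ _ h *; apply: h. Qed.

Definition M1 : {set W} := [set g | dec (exists k, N (g, k))].
Definition N1s : {set W} := [set g | dec (N (g, 1%g))].

Lemma M1P g : reflect (exists k, N (g, k)) (g \in M1).
Proof. by rewrite inE; apply: decP. Qed.
Lemma N1P g : reflect (N (g, 1%g)) (g \in N1s).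
Proof. by rewrite inE; apply: decP. Qed.

Lemma M1_gs : group_set M1.
Proof.
apply/group_setP; split; first by apply/M1P; exists 1%g.
move=> x y /M1P [k hk] /M1P [l hl]; apply/M1P; exists (k * l)%g.
exact: (NM hk hl).
Qed.
Canonical M1_group := group M1_gs.

Lemma N1_gs : group_set N1s.
Proof.
apply/group_setP; split; first exact/N1P.
move=> x y /N1P hx /N1P hy; apply/N1P.
by have := NM hx hy; rewrite /= mulg1.
Qed.
Canonical N1_group := group N1_gs.

Lemma conjN x g k : g \in Gp p -> N (x, k) -> N ((x ^ g)%g, k).
Proof.
move=> Gg hx; have Gg' : (g^-1)%g \in Gp p by rewrite groupV.
have := nN Gg' hx.
by rewrite /= invgK conjgE mulgA.
Qed.

Lemma M1_normal : (M1 <| Gp p)%g.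
Proof.
apply/andP; split.
  by apply/subsetP => g /M1P [k hk]; exact: (NG hk).
apply/subsetP => g Gg; rewrite inE; apply/subsetP => _ /imsetP [x /M1P [k hk] ->].
by apply/M1P; exists k; apply: conjN.
Qed.

Lemma N1_normal : (N1s <| Gp p)%g.
Proof.
apply/andP; split.
  by apply/subsetP => g /N1P hk; exact: (NG hk).
apply/subsetP => g Gg; rewrite inE; apply/subsetP => _ /imsetP [x /N1P hk ->].
by apply/N1P; apply: conjN.
Qed.

Lemma N1_sub : (N1s \subset M1)%g.
Proof. by apply/subsetP => g /N1P h; apply/M1P; exists 1%g. Qed.

Lemma comm_N1 g x : g \in Gp p -> x \in M1 -> ([~ g, x])%g \in N1s.
Proof.
move=> Gg /M1P [k hk]; apply/N1P.
have h1 := conjN Gg (NV hk); rewrite /= in h1.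
by have := NM h1 hk; rewrite /= mulVg commgEr.
Qed.


Local Open Scope ring_scope.
Lemma T_ne1 (e : 'F_p) : e != 0 -> @T p e != 1%g.
Proof.
move=> he; apply/eqP => h; have := congr1 (fun s : {perm P1 p} => s (Some 0)) h.
rewrite /= TE perm1 add0r => -[] e0; by rewrite e0 eqxx in he.
Qed.

Lemma in_Gp0 h : h \in Hp p -> ((0, h)%g : W) \in Gp p.
Proof. by move=> Hh; rewrite GpE /= sum0 eqxx. Qed.

Lemma M1_sub_N1 : (M1 \subset N1s)%g.
Proof.
have T1 : @T p 1 != 1%g by apply: T_ne1; apply: oner_neq0.
have G0T := in_Gp0 (T_Hp 1).
have [M11|M1A|M1G] := normal_Gp p_pr p3 M1_normal.
- by rewrite M11 sub1G.
- rewrite M1A; have [N11|N1A|N1G] := normal_Gp p_pr p3 N1_normal.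
  + case/eqP: T1; apply: faithful_pact => a sa; apply: (cent_pact (x := ((0, T 1) : W))).
    have Aa : ((a, 1%g) : W) \in Ap p by rewrite inAp sa.
    have := comm_N1 G0T (_ : ((a, 1%g) : W) \in M1); rewrite M1A N11 => /(_ Aa).
    by rewrite inE => /commgP.
  + by rewrite N1A.
  + case/eqP: T1; have : ((0, T 1) : W) \in Ap p.
      by rewrite -M1A (subsetP N1_sub) // N1G.
    by rewrite inE => /andP [_ /eqP].
- rewrite M1G; have [N11|N1A|N1G] := normal_Gp p_pr p3 N1_normal; last by rewrite N1G.
  + have GD := in_Gp0 (D_Hp p_pr p3).
    have := comm_N1 GD (_ : ((0, T 1) : W) \in M1); rewrite M1G N11 => /(_ G0T).
    rewrite inE => /eqP /(congr1 snd) /=.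
    move=> hc; exfalso; move: hc; change ([~ D p, T 1%R]%g = 1%g -> False); rewrite D_comm // mulr1 => /eqP.
    by apply/negP; apply: T_ne1; rewrite oppr_eq0 three_neq0.
  + have GD := in_Gp0 (D_Hp p_pr p3).
    have := comm_N1 GD (_ : ((0, T 1) : W) \in M1); rewrite M1G N1A => /(_ G0T).
    rewrite inE => /andP [_ /eqP] hc; exfalso; move: hc.
    change ([~ D p, T 1%R]%g = 1%g -> False); rewrite D_comm // mulr1 => /eqP.
    by apply/negP; apply: T_ne1; rewrite oppr_eq0 three_neq0.
Qed.

End Main.

Theorem lemma3p2 (p : nat) (K : groupType) (N : W p * K -> Prop) :
  prime p -> p %% 3 = 1 ->
  is_subgroup_GpxK N -> normalized_by_Gp N ->
  exists L : K -> Prop, is_subgroup L /\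
    [\/ (forall g k, N (g, k) <-> g = 1%g /\ L k),
        (forall g k, N (g, k) <-> g \in Ap p /\ L k) |
        (forall g k, N (g, k) <-> g \in Gp p /\ L k)].
Proof.
move=> p_pr p3 sN nN.
have sub := M1_sub_N1 p_pr p3 sN nN.
have [_ N1 NM NV] := sN.
have key g k : N (g, k) <-> g \in M1 N /\ N (1%g, k).
  split.
    move=> h; split; first by apply/M1P; exists k.
    have /N1P hg : g \in N1s N by apply: (subsetP sub); apply/M1P; exists k.
    by have := NM _ _ (NV _ hg) h; rewrite /= mulVg invg1 mul1g.
  case=> /(subsetP sub) /N1P hg h1.
  by have := NM _ _ hg h1; rewrite /= mulg1 mul1g.
exists (fun k => N (1%g, k)); split.
  split => //.
    by move=> x y hx hy; have := NM _ _ hx hy; rewrite /= mulg1.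
  by move=> x hx; have := NV _ hx; rewrite /= invg1.
have [M11|M1A|M1G] := normal_Gp p_pr p3 (M1_normal sN nN).
- apply: Or31 => g k; rewrite key M11 inE.
  by split => -[/eqP ? ?].
- by apply: Or32 => g k; rewrite key M1A.
- by apply: Or33 => g k; rewrite key M1G.
Qed.
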